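(* Let $G$ be a (discrete) group and $H$ a Hecke subgroup of $G$ such that the discrete Hecke pair $(G,H)$ is finitely generated. Then there exists a locally bounded and proper length function on $(G,H)$, i.e. a length function $l$ on $G$ with $l|_H=0$ such that for every $n$ the set $\{Hx\in H\backslash G: l(x)\le n\}$ is finite.
   Context: $H$ is a Hecke subgroup of a group $G$ if $[H:H\cap xHx^{-1}]<\infty$ for all $x\in G$. A length function on $G$ is a function $l:G\to[0,\infty)$ with $l(e)=0$, $l(g)=l(g^{-1})$, $l(gh)\le l(g)+l(h)$; it is a length function on $(G,H)$ if $l$ vanishes on $H$. The pair $(G,H)$ is finitely generated if there is a finite set $S\subseteq G$ with $H\backslash G=\bigcup_{n\in\mathbb N}H\hat S^n$, where $\hat S=S\cup S^{-1}\cup\{e\}$. (For discrete pairs local boundedness is automatic and properness means finiteness of the sets above.) *)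

(* Defs.v *)
From Stdlib Require Import Reals List.
Open Scope R_scope.

Record Group := MkGroup {
  carrier :> Type;
  gmul : carrier -> carrier -> carrier;
  ginv : carrier -> carrier;
  gone : carrier;
  gmul_assoc : forall x y z, gmul x (gmul y z) = gmul (gmul x y) z;
  gmul_1l : forall x, gmul gone x = x;
  gmul_1r : forall x, gmul x gone = x;
  gmul_Vl : forall x, gmul (ginv x) x = gone;
  gmul_Vr : forall x, gmul x (ginv x) = gone
}.

Arguments gmul {g} _ _.
Arguments ginv {g} _.
Arguments gone {g}.

Definition is_subgroup (G : Group) (H : G -> Prop) : Prop :=
  H gone /\ (forall x y, H x -> H y -> H (gmul x y)) /\ (forall x, H x -> H (ginv x)).

Definition finite_index_in (G : Group) (H K : G -> Prop) : Prop :=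
  exists l : list G, (forall y, In y l -> H y) /\
    forall h, H h -> exists y, In y l /\ K (gmul (ginv y) h).

(* x H x^{-1} as a predicate: z \in xHx^{-1} iff x^{-1} z x \in H. *)
Definition conj_set (G : Group) (H : G -> Prop) (x : G) : G -> Prop :=
  fun z => H (gmul (gmul (ginv x) z) x).

Definition is_hecke_subgroup (G : Group) (H : G -> Prop) : Prop :=
  is_subgroup G H /\
  forall x : G, finite_index_in G H (fun z => H z /\ conj_set G H x z).

Fixpoint word_prod (G : Group) (w : list G) : G :=
  match w with
  | nil => gone
  | s :: w' => gmul s (word_prod G w') end.

Definition hatS (G : Group) (S : list G) (y : G) : Prop :=
  In y S \/ In (ginv y) S \/ y = gone.

(* (G,H) finitely generated: a finite S with H\G = ⋃_n H \hat S^n,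
   i.e. every x ∈ G lies in H s_1 ... s_n with s_i ∈ \hat S. *)
Definition pair_finitely_generated (G : Group) (H : G -> Prop) : Prop :=
  exists S : list G, forall x : G,
    exists (h : G) (w : list G), H h /\ (forall s, In s w -> hatS G S s) /\
      x = gmul h (word_prod G w).

Definition is_length_function (G : Group) (l : G -> R) : Prop :=
  (forall g, 0 <= l g) /\ l gone = 0 /\
  (forall g, l g = l (ginv g)) /\
  (forall g h, l (gmul g h) <= l g + l h).

Definition is_length_function_pair (G : Group) (H : G -> Prop) (l : G -> R) : Prop :=
  is_length_function G l /\ forall h, H h -> l h = 0.

(* Proper (discrete case): for each n, {Hx ∈ H\G : l(x) <= n} is finite, i.e.
   finitely many representatives y with Hx = Hy (x y^{-1} ∈ H). *)
Definition is_proper_length (G : Group) (H : G -> Prop) (l : G -> R) : Prop :=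
  forall n : nat, exists L : list G, forall x : G,
    l x <= INR n -> exists y, In y L /\ H (gmul x (ginv y)).

(* Main.v *)
Require Import Defs.
From Stdlib Require Import Reals List Lia Arith Classical ClassicalEpsilon.
Open Scope R_scope.

Lemma g_inv_unique (G : Group) (a b : G) : gmul a b = gone -> ginv a = b.
Proof.
  intro E. rewrite <- (gmul_1r G (ginv a)), <- E, gmul_assoc, gmul_Vl, gmul_1l. reflexivity.
Qed.

Lemma g_inv_inv (G : Group) (x : G) : ginv (ginv x) = x.
Proof. apply g_inv_unique. apply gmul_Vl. Qed.

Lemma g_inv_mul (G : Group) (x y : G) : ginv (gmul x y) = gmul (ginv y) (ginv x).
Proof.
  apply g_inv_unique. rewrite !gmul_assoc, <- (gmul_assoc G x y), gmul_Vr, gmul_1r, gmul_Vr.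
  reflexivity.
Qed.

Lemma g_inv_one (G : Group) : ginv (@gone G) = gone.
Proof. apply g_inv_unique. apply gmul_1l. Qed.

Lemma g_cancel (G : Group) (u x : G) : gmul u (gmul (ginv u) x) = x.
Proof. rewrite gmul_assoc, gmul_Vr, gmul_1l. reflexivity. Qed.

Definition valid (G : Group) (H : G -> Prop) (S : list G) (w : list (bool * G)) : Prop :=
  forall p, In p w -> if fst p then hatS G S (snd p) else H (snd p).

Fixpoint cost {G : Group} (w : list (bool * G)) : nat :=
  match w with nil => 0%nat | p :: w' => ((if fst p then 1 else 0) + cost w')%nat end.

Definition prodw (G : Group) (w : list (bool * G)) : G := word_prod G (map snd w).

Lemma prodw_app (G : Group) (w1 w2 : list (bool * G)) :
  prodw G (w1 ++ w2) = gmul (prodw G w1) (prodw G w2).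
Proof.
  unfold prodw. induction w1 as [|p w1 IH]; simpl.
  - rewrite gmul_1l. reflexivity.
  - rewrite IH, gmul_assoc. reflexivity.
Qed.

Lemma cost_app (G : Group) (w1 w2 : list (bool * G)) : cost (w1 ++ w2) = (cost w1 + cost w2)%nat.
Proof. induction w1 as [|p w1 IH]; simpl; lia. Qed.

Fixpoint invw {G : Group} (w : list (bool * G)) : list (bool * G) :=
  match w with nil => nil | p :: w' => invw w' ++ ((fst p, ginv (snd p)) :: nil) end.

Lemma invw_prod (G : Group) (w : list (bool * G)) : prodw G (invw w) = ginv (prodw G w).
Proof.
  induction w as [|p w IH]; simpl.
  - rewrite g_inv_one. reflexivity.
  - rewrite prodw_app, IH. unfold prodw at 2. simpl. rewrite gmul_1r.
    unfold prodw. simpl. rewrite g_inv_mul. reflexivity.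
Qed.

Lemma invw_cost (G : Group) (w : list (bool * G)) : cost (invw w) = cost w.
Proof. induction w as [|p w IH]; simpl; [reflexivity|]. rewrite cost_app, IH. simpl. lia. Qed.

Lemma invw_valid (G : Group) (H : G -> Prop) (S : list G) (w : list (bool * G)) :
  is_subgroup G H -> valid G H S w -> valid G H S (invw w).
Proof.
  intros [H1 [HM HI]]. induction w as [|p w IH]; simpl; intros V q Hq; [contradiction|].
  apply in_app_iff in Hq. destruct Hq as [Hq|Hq].
  - apply IH; [intros r Hr; apply V; right; exact Hr | exact Hq].
  - destruct Hq as [Hq|[]]. subst q. simpl. specialize (V p (or_introl eq_refl)).
    destruct p as [[|] g]; simpl in *.
    + unfold hatS in *. destruct V as [V|[V|V]].
      * right; left; rewrite g_inv_inv; exact V.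
      * left; exact V.
      * right; right; subst; apply g_inv_one.
    + apply HI; exact V.
Qed.

Definition U (G : Group) (H : G -> Prop) (L : list G) (x : G) : Prop :=
  exists y, In y L /\ H (gmul (ginv y) x).

Lemma dc_cover (G : Group) (H : G -> Prop) : is_hecke_subgroup G H -> forall z : G,
  exists R : list G, (forall u, In u R -> exists a, H a /\ u = gmul a z) /\
    (forall a b, H a -> H b -> U G H R (gmul (gmul a z) b)).
Proof.
  intros [[H1 [HM HI]] HK] z. destruct (HK z) as [l [Hl Hc]].
  exists (map (fun y => gmul y z) l). split.
  - intros u Hu. apply in_map_iff in Hu. destruct Hu as [y [<- Hy]]. exists y. auto.
  - intros a b Ha Hb. destruct (Hc a Ha) as [y [Hy [_ Hk]]]. unfold conj_set in Hk.
    exists (gmul y z). split; [apply in_map_iff; exists y; auto|].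
    replace (gmul (ginv (gmul y z)) (gmul (gmul a z) b)) with
      (gmul (gmul (gmul (ginv z) (gmul (ginv y) a)) z) b).
    + apply HM; assumption.
    + rewrite g_inv_mul. rewrite !gmul_assoc. reflexivity.
Qed.

Lemma hatS_in (G : Group) (S : list G) (s : G) :
  hatS G S s -> In s (gone :: S ++ map ginv S).
Proof.
  intros [V|[V|V]].
  - right. apply in_app_iff. left. exact V.
  - right. apply in_app_iff. right. apply in_map_iff. exists (ginv s).
    rewrite g_inv_inv. auto.
  - left. auto.
Qed.

Lemma cover_n (G : Group) (H : G -> Prop) (S : list G) :
  is_hecke_subgroup G H -> forall n : nat, exists L : list G,
    U G H L gone /\ (forall h x, H h -> U G H L x -> U G H L (gmul h x)) /\
    (forall w, valid G H S w -> (cost w <= n)%nat -> U G H L (prodw G w)).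
Proof.
  intros HH. pose proof HH as [[H1 [HM HI]] _].
  assert (X : forall z : G, {R : list G | (forall u, In u R -> exists a, H a /\ u = gmul a z) /\
    (forall a b, H a -> H b -> U G H R (gmul (gmul a z) b))}).
  { intro z. apply constructive_indefinite_description. apply dc_cover; assumption. }
  set (Rf := fun z => proj1_sig (X z)).
  assert (RA : forall z u, In u (Rf z) -> exists a, H a /\ u = gmul a z).
  { intro z. exact (proj1 (proj2_sig (X z))). }
  assert (RB : forall z a b, H a -> H b -> U G H (Rf z) (gmul (gmul a z) b)).
  { intro z. exact (proj2 (proj2_sig (X z))). }
  set (Sh := gone :: S ++ map ginv S).
  induction n as [|n [L [Le [LH LW]]]].
  - exists (gone :: nil). split; [|split].
    + exists gone. split; [left; auto|]. rewrite g_inv_one, gmul_1l. exact H1.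
    + intros h x Hh [y [[<-|[]] Hy]]. exists gone. split; [left; auto|].
      rewrite g_inv_one, gmul_1l in *. apply HM; assumption.
    + intros w V C. exists gone. split; [left; auto|]. rewrite g_inv_one, gmul_1l.
      induction w as [|p w IH].
      * exact H1.
      * destruct p as [[|] g]; simpl in C; [lia|].
        unfold prodw; simpl. apply HM.
        -- exact (V _ (or_introl eq_refl)).
        -- apply IH; [intros q Hq; apply V; right; exact Hq | exact C].
  - set (L' := L ++ flat_map (fun y => flat_map (fun s => Rf (gmul s y)) Sh) L).
    assert (Lsub : forall x, U G H L x -> U G H L' x).
    { intros x [y [Hy Hx]]. exists y. split; [apply in_app_iff; left; exact Hy | exact Hx]. }
    assert (Rsub : forall y s x, In y L -> In s Sh -> U G H (Rf (gmul s y)) x -> U G H L' x).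
    { intros y s x Hy Hs [u [Hu Hx]]. exists u. split; [|exact Hx].
      apply in_app_iff. right. apply in_flat_map. exists y. split; [exact Hy|].
      apply in_flat_map. exists s. auto. }
    assert (LH' : forall h x, H h -> U G H L' x -> U G H L' (gmul h x)).
    { intros h x Hh [u [Hu Hx]]. apply in_app_iff in Hu. destruct Hu as [Hu|Hu].
      - apply Lsub. apply LH; [exact Hh|]. exists u. auto.
      - apply in_flat_map in Hu. destruct Hu as [y [Hy Hu]].
        apply in_flat_map in Hu. destruct Hu as [s [Hs Hu]].
        apply (Rsub y s); [exact Hy|exact Hs|].
        destruct (RA _ _ Hu) as [a [Ha Eu]].
        replace (gmul h x) with (gmul (gmul (gmul h a) (gmul s y)) (gmul (ginv u) x)).
        + apply RB; [apply HM; assumption | exact Hx].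
        + rewrite <- (gmul_assoc G h a), <- Eu, <- (gmul_assoc G h u), g_cancel. reflexivity. }
    exists L'. split; [|split].
    + apply Lsub. exact Le.
    + exact LH'.
    + intros w V C. induction w as [|p w IH].
      * apply Lsub. exact Le.
      * assert (V' : valid G H S w) by (intros q Hq; apply V; right; exact Hq).
        pose proof (V _ (or_introl eq_refl)) as Vp.
        destruct p as [[|] g]; simpl in C, Vp; unfold prodw; simpl.
        -- assert (Cw : (cost w <= n)%nat) by lia.
           destruct (LW w V' Cw) as [y [Hy Hx]].
           apply (Rsub y g); [exact Hy | apply hatS_in; exact Vp|].
           replace (gmul g (word_prod G (map snd w))) with
             (gmul (gmul gone (gmul g y)) (gmul (ginv y) (prodw G w))).
           ++ apply RB; assumption.
           ++ rewrite gmul_1l, <- gmul_assoc, g_cancel. reflexivity.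
        -- apply LH'; [exact Vp|]. apply IH; [exact V'|]. lia.
Qed.

Definition Pw (G : Group) (H : G -> Prop) (S : list G) (x : G) (n : nat) : Prop :=
  exists w, valid G H S w /\ (cost w <= n)%nat /\ x = prodw G w.

Theorem lemma2p11 (G : Group) (H : G -> Prop) :
  is_hecke_subgroup G H ->
  pair_finitely_generated G H ->
  exists l : G -> R, is_length_function_pair G H l /\ is_proper_length G H l.
Proof.
  intros HH [S HS]. pose proof HH as [[H1 [HM HI]] _].
  assert (Ex : forall x, exists n, Pw G H S x n).
  { intro x. destruct (HS x) as [h [w [Hh [Hw Ex]]]].
    exists (length w). exists ((false, h) :: map (fun s => (true, s)) w). split; [|split].
    - intros p [<-|Hp]; [exact Hh|]. apply in_map_iff in Hp. destruct Hp as [s [<- Hs]].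
      apply Hw; exact Hs.
    - simpl. clear. induction w; simpl; lia.
    - rewrite Ex. unfold prodw. simpl. rewrite map_map. simpl. rewrite map_id. reflexivity. }
  assert (Min : forall x, exists n, Pw G H S x n /\ forall m, Pw G H S x m -> (n <= m)%nat).
  { intro x. destruct (dec_inh_nat_subset_has_unique_least_element (Pw G H S x)) as [n [[Pn Mn] _]].
    - intro n. apply classic.
    - apply Ex.
    - exists n. auto. }
  set (l0 := fun x => proj1_sig (constructive_indefinite_description _ (Min x))).
  assert (L1 : forall x, Pw G H S x (l0 x)).
  { intro x. exact (proj1 (proj2_sig (constructive_indefinite_description _ (Min x)))). }
  assert (L2 : forall x m, Pw G H S x m -> (l0 x <= m)%nat).
  { intro x. exact (proj2 (proj2_sig (constructive_indefinite_description _ (Min x)))). }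
  assert (Pinv : forall x n, Pw G H S x n -> Pw G H S (ginv x) n).
  { intros x n [w [V [C E]]]. exists (invw w). split; [|split].
    - apply invw_valid; [exact (conj H1 (conj HM HI)) | exact V].
    - rewrite invw_cost. exact C.
    - rewrite invw_prod, E. reflexivity. }
  exists (fun x => INR (l0 x)). split; [split; [split; [|split; [|split]]|] |].
  - intro g. apply pos_INR.
  - assert (l0 gone <= 0)%nat.
    { apply L2. exists nil. split; [intros p []|split; [simpl; lia | reflexivity]]. }
    replace (l0 gone) with 0%nat by lia. reflexivity.
  - intro g. f_equal. apply Nat.le_antisymm.
    + apply L2. rewrite <- (g_inv_inv G g). apply Pinv. rewrite g_inv_inv. apply L1.
    + apply L2. apply Pinv. apply L1.
  - intros g h. rewrite <- plus_INR. apply le_INR. apply L2.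
    destruct (L1 g) as [w1 [V1 [C1 E1]]]. destruct (L1 h) as [w2 [V2 [C2 E2]]].
    exists (w1 ++ w2). split; [|split].
    + intros p Hp. apply in_app_iff in Hp. destruct Hp; [apply V1 | apply V2]; assumption.
    + rewrite cost_app. lia.
    + rewrite prodw_app, <- E1, <- E2. reflexivity.
  - intros h Hh. assert (l0 h <= 0)%nat.
    { apply L2. exists ((false, h) :: nil). split; [|split].
      - intros p [<-|[]]. exact Hh.
      - simpl; lia.
      - unfold prodw. simpl. rewrite gmul_1r. reflexivity. }
    replace (l0 h) with 0%nat by lia. reflexivity.
  - intro n. destruct (cover_n G H S HH n) as [L [_ [_ LW]]].
    exists (map ginv L). intros x Hx. apply INR_le in Hx.
    destruct (Pinv x _ (L1 x)) as [w [V [C E]]].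
    destruct (LW w V ltac:(lia)) as [y [Hy Hxy]]. rewrite <- E in Hxy.
    exists (ginv y). split; [apply in_map_iff; exists y; auto|].
    rewrite g_inv_inv. replace (gmul x y) with (ginv (gmul (ginv y) (ginv x))) by (rewrite g_inv_mul, !g_inv_inv; reflexivity). apply HI. exact Hxy.
Qed.
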